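(* If $A\subseteq\mathbb N_0\times\mathbb S$ is a Schnorr test for a computable forecasting system $\varphi$, then $n\mapsto\overline P_\varphi([A_n])$ is a computable sequence of real numbers.
   Context: $\mathbb N_0=\{0,1,\dots\}$; $\Omega=\{0,1\}^{\mathbb N}$; $\mathbb S$ finite binary strings, $|s|$ length, $\omega^n$ first $n$ entries of $\omega$; $[s]=\{\omega:\omega^{|s|}=s\}$, $[A]=\bigcup_{s\in A}[s]$. For $A\subseteq\mathbb N_0\times\mathbb S$: $A_n=\{s:(n,s)\in A\}$, $A_n^{<\ell}=\{s\in A_n:|s|<\ell\}$. $\mathcal I$: nonempty closed subintervals of $[0,1]$; $\overline E_I(f)=\max_{p\in I}[pf(1)+(1-p)f(0)]$. Forecasting system $\varphi:\mathbb S\to\mathcal I$, $\underline\varphi=\min\varphi$, $\overline\varphi=\max\varphi$. Supermartingale: $M:\mathbb S\to\mathbb R$ with $\overline E_{\varphi(s)}(M(s\,\cdot))\le M(s)$ for all $s$. $\overline P_\varphi(G)=\inf\{M(\square):M\text{ supermartingale for }\varphi,\ \liminf_nM(\omega^n)\ge\mathbb 1_G(\omega)\ \forall\omega\}$. A real map $r$ on an encoded countable set is computable if there is a recursive rational $q$ with $|r(d)-q(d,N)|\le2^{-N}$; $\varphi$ is computable if $\underline\varphi,\overline\varphi$ are computable. A Schnorr test for $\varphi$ is a recursive $A\subseteq\mathbb N_0\times\mathbb S$ with $\overline P_\varphi([A_n])\le2^{-n}$ for all $n$, and a recursive $e:\mathbb N_0^2\to\mathbb N_0$ with $\overline P_\varphi([A_n]\setminus[A_n^{<\ell}])\le2^{-N}$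 for all $(N,n)$ and $\ell\ge e(N,n)$. *)

(* Defs.v *)
From Stdlib Require Import Reals List ClassicalEpsilon.
From Coquelicot Require Import Coquelicot.
Import ListNotations.
Open Scope R_scope.

Inductive mu : Type :=
| muZero : mu
| muSucc : mu
| muProj : nat -> mu
| muComp : mu -> list mu -> mu
| muPrim : mu -> mu -> mu
| muMin  : mu -> mu.

Inductive mu_eval : mu -> list nat -> nat -> Prop :=
| ev_zero xs : mu_eval muZero xs 0
| ev_succ x xs : mu_eval muSucc (x :: xs) (S x)
| ev_proj i xs : mu_eval (muProj i) xs (nth i xs 0%nat)
| ev_comp f gs xs ys z :
    Forall2 (fun g y => mu_eval g xs y) gs ys ->
    mu_eval f ys z -> mu_eval (muComp f gs) xs z
| ev_prim0 f g xs z : mu_eval f xs z -> mu_eval (muPrim f g) (0%nat :: xs) z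
| ev_primS f g n xs r z :
    mu_eval (muPrim f g) (n :: xs) r ->
    mu_eval g (n :: r :: xs) z -> mu_eval (muPrim f g) (S n :: xs) z
| ev_min f xs n :
    mu_eval f (n :: xs) 0%nat ->
    (forall m, (m < n)%nat -> exists k, k <> 0%nat /\ mu_eval f (m :: xs) k) ->
    mu_eval (muMin f) xs n.

Definition recursive1 (f : nat -> nat) : Prop :=
  exists p : mu, forall x, mu_eval p [x] (f x).
Definition recursive2 (f : nat -> nat -> nat) : Prop :=
  exists p : mu, forall x y, mu_eval p [x; y] (f x y).

Definition bstr := list bool.
Definition path := nat -> bool.          (* Omega = {0,1}^N, indexed from 0 *)

Fixpoint bcode (s : bstr) : nat :=
  match s with
  | [] => 0%nat
  | b :: s' => (2 * bcode s' + 1 + (if b then 1 else 0))%nat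
  end.

Definition prefix (w : path) (n : nat) : bstr := map w (seq 0 n).

Definition cyl (s : bstr) : path -> Prop := fun w => prefix w (length s) = s.

Definition cylset (B : bstr -> Prop) : path -> Prop :=
  fun w => exists s, B s /\ cyl s w.

Definition indic (G : path -> Prop) (w : path) : R :=
  match excluded_middle_informative (G w) with left _ => 1 | right _ => 0 end.

(* phi : S -> I, I the nonempty closed subintervals of [0,1];
   phi(s) = [flo s, fhi s]. *)
Record forecast : Type := {
  flo : bstr -> R;
  fhi : bstr -> R;
  f_ok : forall s, 0 <= flo s /\ flo s <= fhi s /\ fhi s <= 1 }.

(* Upper expectation of f : {0,1} -> R for the interval [lo, hi]:
   max_{p in [lo,hi]} p f(1) + (1-p) f(0). We only use it through the
   inequality  upper_exp <= c, written out as: every p in [lo,hi] gives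
   p f(1) + (1-p) f(0) <= c (the max is attained on the compact interval). *)
Definition upper_exp_le (lo hi : R) (f : bool -> R) (c : R) : Prop :=
  forall p, lo <= p <= hi -> p * f true + (1 - p) * f false <= c.

Definition supermartingale (phi : forecast) (M : bstr -> R) : Prop :=
  forall s, upper_exp_le (flo phi s) (fhi phi s) (fun x => M (s ++ [x])) (M s).

Definition upper_prob (phi : forecast) (G : path -> Prop) : Rbar :=
  Glb_Rbar (fun v => exists M : bstr -> R,
    supermartingale phi M /\
    (forall w, Rbar_le (Finite (indic G w)) (LimInf_seq (fun n => M (prefix w n)))) /\
    v = M []).

(* The rational coded by (a,b,c) : (a - b)/(c + 1). A recursive rational
   map q(d, N) is given by three recursive functions a, b, c. *)
Definition ratc (a b c : nat) : R := (INR a - INR b) / INR (S c).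

Definition computable_rmap {X : Type} (enc : X -> nat) (r : X -> R) : Prop :=
  exists a b c : nat -> nat -> nat,
    recursive2 a /\ recursive2 b /\ recursive2 c /\
    forall d N, Rabs (r d - ratc (a (enc d) N) (b (enc d) N) (c (enc d) N)) <= (/2) ^ N.

(* computable sequence of real numbers (given as extended-real values;
   in particular every value is required to be a real number) *)
Definition computable_rbar_seq (r : nat -> Rbar) : Prop :=
  exists a b c : nat -> nat -> nat,
    recursive2 a /\ recursive2 b /\ recursive2 c /\
    forall n N, exists x : R, r n = Finite x /\
      Rabs (x - ratc (a n N) (b n N) (c n N)) <= (/2) ^ N.

Definition computable_forecast (phi : forecast) : Prop :=
  computable_rmap bcode (flo phi) /\ computable_rmap bcode (fhi phi).

Definition recursive_set (A : nat -> bstr -> bool) : Prop :=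
  exists chi : nat -> nat -> nat, recursive2 chi /\
    forall n s, chi n (bcode s) = (if A n s then 1%nat else 0%nat).

Definition An (A : nat -> bstr -> bool) (n : nat) : bstr -> Prop :=
  fun s => A n s = true.
Definition An_lt (A : nat -> bstr -> bool) (n l : nat) : bstr -> Prop :=
  fun s => A n s = true /\ (length s < l)%nat.

Definition schnorr_test (phi : forecast) (A : nat -> bstr -> bool) : Prop :=
  recursive_set A /\
  (forall n, Rbar_le (upper_prob phi (cylset (An A n))) (Finite ((/2) ^ n))) /\
  exists e : nat -> nat -> nat, recursive2 e /\
    forall N n l, (e N n <= l)%nat ->
      Rbar_le (upper_prob phi (fun w => cylset (An A n) w /\ ~ cylset (An_lt A n l) w))
              (Finite ((/2) ^ N)).

(* Main.v *)
Require Import Defs.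
From Stdlib Require Import Reals List.
From Coquelicot Require Import Coquelicot.
From Stdlib Require Import Arith Lia Lra ClassicalEpsilon Classical.
Import ListNotations.
Open Scope nat_scope.

Definition mrec (f : list nat -> nat) : Prop :=
  exists p : mu, forall xs, mu_eval p xs (f xs).

Lemma rec_ext f g : mrec f -> (forall xs, f xs = g xs) -> mrec g.
Proof. intros [p Hp] E; exists p; intros xs; rewrite <- E; auto. Qed.

Lemma rec_proj i : mrec (fun xs => nth i xs 0).
Proof. exists (muProj i); intros; constructor. Qed.

Lemma rec_compl f (gs : list (list nat -> nat)) :
  mrec f -> List.Forall mrec gs -> mrec (fun xs => f (map (fun g => g xs) gs)).
Proof.
  intros [pf Hf] Hg.
  assert (exists ps, forall xs, Forall2 (fun p y => mu_eval p xs y) ps (map (fun g => g xs) gs)) as [ps Hps].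
  { induction Hg as [|g gs [p Hp] _ [ps IH]].
    - exists []; intros; constructor.
    - exists (p :: ps); intros; simpl; constructor; auto. }
  exists (muComp pf ps); intros xs; econstructor; eauto.
Qed.

Lemma rec_zero : mrec (fun _ => 0).
Proof. exists muZero; intros; constructor. Qed.

Lemma rec_succ f : mrec f -> mrec (fun xs => S (f xs)).
Proof.
  intros [p Hp]; exists (muComp muSucc [p]); intros xs.
  econstructor. constructor. apply Hp. constructor. constructor.
Qed.

Lemma rec_const k : mrec (fun _ => k).
Proof. induction k. apply rec_zero. apply (rec_succ (fun _ => k)); auto. Qed.

Lemma rec_op1 (op : nat -> nat) g :
  mrec (fun xs => op (nth 0 xs 0)) -> mrec g -> mrec (fun xs => op (g xs)).
Proof.
  intros Ho Hg. eapply rec_ext. apply (rec_compl _ [g] Ho). repeat constructor; auto.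
  reflexivity.
Qed.

Lemma rec_op2 (op : nat -> nat -> nat) g1 g2 :
  mrec (fun xs => op (nth 0 xs 0) (nth 1 xs 0)) -> mrec g1 -> mrec g2 ->
  mrec (fun xs => op (g1 xs) (g2 xs)).
Proof.
  intros Ho H1 H2. eapply rec_ext. apply (rec_compl _ [g1; g2] Ho). repeat constructor; auto.
  reflexivity.
Qed.

Lemma rec_op3 (op : nat -> nat -> nat -> nat) g1 g2 g3 :
  mrec (fun xs => op (nth 0 xs 0) (nth 1 xs 0) (nth 2 xs 0)) -> mrec g1 -> mrec g2 -> mrec g3 ->
  mrec (fun xs => op (g1 xs) (g2 xs) (g3 xs)).
Proof.
  intros Ho H1 H2 H3. eapply rec_ext. apply (rec_compl _ [g1; g2; g3] Ho). repeat constructor; auto.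
  reflexivity.
Qed.

Fixpoint PR (z s : list nat -> nat) (k : nat) (ps : list nat) : nat :=
  match k with 0 => z ps | S k => s (k :: PR z s k ps :: ps) end.

Definition fst' (m : nat) (xs : list nat) : list nat := map (fun i => nth i xs 0) (seq 0 m).

Lemma nth_fst' m xs i : i < m -> nth i (fst' m xs) 0 = nth i xs 0.
Proof.
  intros H. unfold fst'. rewrite (nth_indep _ 0 ((fun i => nth i xs 0) 0)).
  rewrite (map_nth (fun i => nth i xs 0)), seq_nth; auto. rewrite length_map, length_seq; auto.
Qed.

Lemma rec_PR m z s cnt : mrec z -> mrec s -> mrec cnt ->
  mrec (fun xs => PR z s (cnt xs) (fst' m xs)).
Proof.
  intros [pz Hz] [ps Hs] [pc Hc].
  assert (HP : forall k l, mu_eval (muPrim pz ps) (k :: l) (PR z s k l)).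
  { induction k; intros l; simpl. constructor; auto. econstructor; eauto. }
  exists (muComp (muPrim pz ps) (pc :: map muProj (seq 0 m))).
  intros xs. econstructor; [|apply HP].
  constructor; auto. unfold fst'. generalize (seq 0 m). induction l; simpl; constructor; auto.
  constructor.
Qed.

Lemma rec_add : mrec (fun xs => nth 0 xs 0 + nth 1 xs 0).
Proof.
  eapply rec_ext.
  apply (rec_PR 2 (fun ps => nth 1 ps 0) (fun ys => S (nth 1 ys 0)) (fun xs => nth 0 xs 0)).
  apply rec_proj. apply rec_succ, rec_proj. apply rec_proj.
  intros xs. simpl. generalize (nth 0 xs 0). induction n; simpl; auto.
Qed.

Lemma rec_mul : mrec (fun xs => nth 0 xs 0 * nth 1 xs 0).
Proof.
  eapply rec_ext.
  apply (rec_PR 2 (fun ps => 0) (fun ys => nth 1 ys 0 + nth 3 ys 0) (fun xs => nth 0 xs 0)).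
  apply rec_zero. apply (rec_op2 Nat.add); [apply rec_add|apply rec_proj|apply rec_proj].
  apply rec_proj.
  intros xs. simpl. generalize (nth 0 xs 0). induction n; simpl; auto. rewrite IHn. lia.
Qed.

Lemma rec_pred : mrec (fun xs => pred (nth 0 xs 0)).
Proof.
  eapply rec_ext.
  apply (rec_PR 1 (fun ps => 0) (fun ys => nth 0 ys 0) (fun xs => nth 0 xs 0)).
  apply rec_zero. apply rec_proj. apply rec_proj.
  intros xs. simpl. destruct (nth 0 xs 0); reflexivity.
Qed.

Lemma rec_sub : mrec (fun xs => nth 0 xs 0 - nth 1 xs 0).
Proof.
  eapply rec_ext.
  apply (rec_PR 2 (fun ps => nth 0 ps 0) (fun ys => pred (nth 1 ys 0)) (fun xs => nth 1 xs 0)).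
  apply rec_proj. apply (rec_op1 pred); [apply rec_pred|apply rec_proj]. apply rec_proj.
  intros xs. simpl. generalize (nth 1 xs 0). induction n; simpl. lia. rewrite IHn. lia.
Qed.

Lemma rec_pow : mrec (fun xs => nth 0 xs 0 ^ nth 1 xs 0).
Proof.
  eapply rec_ext.
  apply (rec_PR 2 (fun ps => 1) (fun ys => nth 1 ys 0 * nth 2 ys 0) (fun xs => nth 1 xs 0)).
  apply rec_const. apply (rec_op2 Nat.mul); [apply rec_mul|apply rec_proj|apply rec_proj]. apply rec_proj.
  intros xs. simpl. generalize (nth 1 xs 0). induction n; simpl; auto. rewrite IHn. lia.
Qed.

Definition cond (c u v : nat) : nat := if c =? 0 then v else u.

Lemma rec_cond : mrec (fun xs => cond (nth 0 xs 0) (nth 1 xs 0) (nth 2 xs 0)).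
Proof.
  eapply rec_ext with (f := fun xs => (1 - (1 - nth 0 xs 0)) * nth 1 xs 0 + (1 - nth 0 xs 0) * nth 2 xs 0).
  - apply (rec_op2 Nat.add); [apply rec_add| |].
    + apply (rec_op2 Nat.mul); [apply rec_mul| |apply rec_proj].
      apply (rec_op2 Nat.sub); [apply rec_sub|apply rec_const|].
      apply (rec_op2 Nat.sub); [apply rec_sub|apply rec_const|apply rec_proj].
    + apply (rec_op2 Nat.mul); [apply rec_mul| |apply rec_proj].
      apply (rec_op2 Nat.sub); [apply rec_sub|apply rec_const|apply rec_proj].
  - intros xs; unfold cond. destruct (nth 0 xs 0); simpl; lia.
Qed.

Lemma rec_max : mrec (fun xs => Nat.max (nth 0 xs 0) (nth 1 xs 0)).
Proof.
  eapply rec_ext with (f := fun xs => nth 0 xs 0 + (nth 1 xs 0 - nth 0 xs 0)).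
  apply (rec_op2 Nat.add); [apply rec_add|apply rec_proj|].
  apply (rec_op2 Nat.sub); [apply rec_sub|apply rec_proj|apply rec_proj].
  intros; lia.
Qed.

Lemma rec_min : mrec (fun xs => Nat.min (nth 0 xs 0) (nth 1 xs 0)).
Proof.
  eapply rec_ext with (f := fun xs => nth 0 xs 0 - (nth 0 xs 0 - nth 1 xs 0)).
  apply (rec_op2 Nat.sub); [apply rec_sub|apply rec_proj|apply rec_sub].
  intros; lia.
Qed.

Lemma rec_leb : mrec (fun xs => if nth 0 xs 0 <=? nth 1 xs 0 then 1 else 0).
Proof.
  eapply rec_ext with (f := fun xs => 1 - (nth 0 xs 0 - nth 1 xs 0)).
  apply (rec_op2 Nat.sub); [apply rec_sub|apply rec_const|apply rec_sub].
  intros xs. destruct (Nat.leb_spec (nth 0 xs 0) (nth 1 xs 0)); lia.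
Qed.

Lemma rec_eqb : mrec (fun xs => if nth 0 xs 0 =? nth 1 xs 0 then 1 else 0).
Proof.
  eapply rec_ext with (f := fun xs => (if nth 0 xs 0 <=? nth 1 xs 0 then 1 else 0) *
                                      (if nth 1 xs 0 <=? nth 0 xs 0 then 1 else 0)).
  apply (rec_op2 Nat.mul); [apply rec_mul|apply rec_leb|].
  apply (rec_op2 (fun a b => if a <=? b then 1 else 0)); [apply rec_leb|apply rec_proj|apply rec_proj].
  intros xs. destruct (Nat.leb_spec (nth 0 xs 0) (nth 1 xs 0));
  destruct (Nat.leb_spec (nth 1 xs 0) (nth 0 xs 0)); destruct (Nat.eqb_spec (nth 0 xs 0) (nth 1 xs 0)); lia.
Qed.

Fixpoint qdiv (d k : nat) : nat :=
  match k with 0 => 0 | S k => qdiv d k + (if (qdiv d k + 1) * d <=? S k then 1 else 0) end.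

Lemma qdiv_spec d k : 0 < d -> d * qdiv d k <= k < d * (qdiv d k + 1).
Proof.
  intros Hd. induction k; simpl. lia.
  destruct (Nat.leb_spec ((qdiv d k + 1) * d) (S k)); nia.
Qed.

Lemma qdiv_div d k : 0 < d -> qdiv d k = k / d.
Proof.
  intros Hd. destruct (qdiv_spec d k Hd).
  apply (Nat.div_unique k d (qdiv d k) (k - d * qdiv d k)); lia.
Qed.

Lemma rec_div : mrec (fun xs => nth 0 xs 0 / nth 1 xs 0).
Proof.
  eapply rec_ext with (f := fun xs => cond (nth 1 xs 0)
     (PR (fun _ => 0) (fun ys => nth 1 ys 0 + (if (nth 1 ys 0 + 1) * nth 3 ys 0 <=? S (nth 0 ys 0) then 1 else 0))
         (nth 0 xs 0) (fst' 2 xs)) 0).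
  - apply (rec_op3 cond); [apply rec_cond|apply rec_proj| |apply rec_const].
    apply (rec_PR 2 (fun _ => 0) _ (fun xs => nth 0 xs 0)); [apply rec_const| |apply rec_proj].
    apply (rec_op2 Nat.add); [apply rec_add|apply rec_proj|].
    apply (rec_op2 (fun a b => if a <=? b then 1 else 0)); [apply rec_leb| |].
    + apply (rec_op2 Nat.mul); [apply rec_mul| |apply rec_proj].
      apply (rec_op2 Nat.add); [apply rec_add|apply rec_proj|apply rec_const].
    + apply rec_succ, rec_proj.
  - intros xs. unfold cond. destruct (Nat.eqb_spec (nth 1 xs 0) 0) as [E|E].
    + rewrite E. simpl. destruct (nth 0 xs 0); reflexivity.
    + rewrite <- qdiv_div by lia. generalize (nth 0 xs 0). induction n; [reflexivity|].
      cbn [PR qdiv]. rewrite IHn. cbn [nth]. rewrite nth_fst' by lia. reflexivity.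
Qed.

Lemma rec_mod : mrec (fun xs => nth 0 xs 0 mod nth 1 xs 0).
Proof.
  eapply rec_ext with (f := fun xs => nth 0 xs 0 - nth 1 xs 0 * (nth 0 xs 0 / nth 1 xs 0)).
  apply (rec_op2 Nat.sub); [apply rec_sub|apply rec_proj|].
  apply (rec_op2 Nat.mul); [apply rec_mul|apply rec_proj|apply rec_div].
  intros xs. pose proof (Nat.div_mod_eq (nth 0 xs 0) (nth 1 xs 0)). lia.
Qed.

Fixpoint sumf (F : nat -> nat) (k : nat) : nat :=
  match k with 0 => 0 | S k => sumf F k + F k end.

Lemma fst'_length m xs : length (fst' m xs) = m.
Proof. unfold fst'. rewrite length_map, length_seq; auto. Qed.

Lemma fst'_idem m xs : fst' m (fst' m xs) = fst' m xs.
Proof.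
  unfold fst' at 1 3. apply map_ext_in. intros i Hi. apply in_seq in Hi.
  apply nth_fst'. lia.
Qed.

Lemma rec_sum m (F : list nat -> nat) (u : list nat -> nat) :
  mrec F -> mrec u -> mrec (fun xs => sumf (fun i => F (i :: fst' m xs)) (u xs)).
Proof.
  intros HF Hu.
  set (s := fun ys => nth 1 ys 0 + F (nth 0 ys 0 :: map (fun i => nth (2 + i) ys 0) (seq 0 m))).
  eapply rec_ext.
  apply (rec_PR m (fun _ => 0) s u). apply rec_const.
  - unfold s. apply (rec_op2 Nat.add (fun ys => nth 1 ys 0)); [apply rec_add|apply rec_proj|].
    eapply rec_ext. apply (rec_compl F ((fun ys => nth 0 ys 0) :: map (fun i ys => nth (2+i) ys 0) (seq 0 m)) HF).
    constructor. apply rec_proj. apply List.Forall_forall. intros g Hg. apply in_map_iff in Hg.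
    destruct Hg as [i [<- _]]. apply rec_proj.
    intros ys; simpl. f_equal. f_equal. rewrite map_map. reflexivity.
  - exact Hu.
  - intros xs. cbv beta. generalize (u xs). induction n as [|n IHn]; [reflexivity|]. cbn [PR sumf]. rewrite IHn. unfold s. cbn [nth].
    do 3 f_equal. exact (fst'_idem m xs).
Qed.


Lemma rec_of_rec2 f : recursive2 f -> mrec (fun xs => f (nth 0 xs 0) (nth 1 xs 0)).
Proof.
  intros [p Hp]. exists (muComp p [muProj 0; muProj 1]). intros xs.
  econstructor; [|apply Hp]. repeat constructor.
Qed.

Lemma rec2_of_rec f : mrec (fun xs => f (nth 0 xs 0) (nth 1 xs 0)) -> recursive2 f.
Proof. intros [p Hp]. exists p. intros x y. apply (Hp [x; y]). Qed.

Definition lebn (a b : nat) : nat := if a <=? b then 1 else 0.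

Lemma rec_addG g1 g2 : mrec g1 -> mrec g2 -> mrec (fun xs => g1 xs + g2 xs).
Proof. apply rec_op2, rec_add. Qed.
Lemma rec_subG g1 g2 : mrec g1 -> mrec g2 -> mrec (fun xs => g1 xs - g2 xs).
Proof. apply rec_op2, rec_sub. Qed.
Lemma rec_mulG g1 g2 : mrec g1 -> mrec g2 -> mrec (fun xs => g1 xs * g2 xs).
Proof. apply rec_op2, rec_mul. Qed.
Lemma rec_powG g1 g2 : mrec g1 -> mrec g2 -> mrec (fun xs => g1 xs ^ g2 xs).
Proof. apply rec_op2, rec_pow. Qed.
Lemma rec_divG g1 g2 : mrec g1 -> mrec g2 -> mrec (fun xs => g1 xs / g2 xs).
Proof. apply rec_op2, rec_div. Qed.
Lemma rec_modG g1 g2 : mrec g1 -> mrec g2 -> mrec (fun xs => g1 xs mod g2 xs).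
Proof. apply rec_op2, rec_mod. Qed.
Lemma rec_minG g1 g2 : mrec g1 -> mrec g2 -> mrec (fun xs => Nat.min (g1 xs) (g2 xs)).
Proof. apply rec_op2, rec_min. Qed.
Lemma rec_maxG g1 g2 : mrec g1 -> mrec g2 -> mrec (fun xs => Nat.max (g1 xs) (g2 xs)).
Proof. apply rec_op2, rec_max. Qed.
Lemma rec_lebG g1 g2 : mrec g1 -> mrec g2 -> mrec (fun xs => lebn (g1 xs) (g2 xs)).
Proof. apply rec_op2, rec_leb. Qed.
Lemma rec_condG g1 g2 g3 : mrec g1 -> mrec g2 -> mrec g3 -> mrec (fun xs => cond (g1 xs) (g2 xs) (g3 xs)).
Proof. apply rec_op3, rec_cond. Qed.
Lemma rec_succG g : mrec g -> mrec (fun xs => S (g xs)).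
Proof. apply rec_succ. Qed.
Lemma rec2G f g1 g2 : recursive2 f -> mrec g1 -> mrec g2 -> mrec (fun xs => f (g1 xs) (g2 xs)).
Proof. intros H; apply rec_op2, rec_of_rec2, H. Qed.

Ltac rg := repeat first
  [ apply rec_proj | apply rec_const | apply rec_addG | apply rec_subG | apply rec_mulG
  | apply rec_powG | apply rec_divG | apply rec_modG | apply rec_minG | apply rec_maxG
  | apply rec_lebG | apply rec_condG | apply rec_succG ].

Lemma test_rg : mrec (fun xs => Nat.min (2 ^ nth 1 xs 0) ((nth 0 xs 0 - 3) * nth 2 xs 0 / S (nth 1 xs 0))).
Proof. rg. Qed.

Ltac rg2 := repeat first
  [ apply rec_proj | apply rec_const | apply rec_addG | apply rec_subG | apply rec_mulG
  | apply rec_powG | apply rec_divG | apply rec_modG | apply rec_minG | apply rec_maxG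
  | apply rec_lebG | apply rec_condG | apply rec_succG
  | (apply rec2G; [assumption | | ]) ].

Lemma sumf_ext F G k : (forall i, i < k -> F i = G i) -> sumf F k = sumf G k.
Proof. induction k; simpl; intros; auto. rewrite IHk, H; auto. Qed.

Section Alg.
Variables (la lb lc ha hb hc chi e : nat -> nat -> nat).

Definition apx (a b c : nat -> nat -> nat) K x := Nat.min (2^K) ((a x K - b x K) * 2^K / S (c x K)).
Definition Ep K p f0 f1 := ((2^K - p) * f0 + p * f1) / 2^K.
Definition digit B T i := T / B^i mod B.
Definition depth c := sumf (fun j => lebn (2^(j+1)) (c+1)) c.
Definition child c x := c + 2^(depth c) * (1+x).
Definition gval n K T c :=
  cond (chi n c) (2^K)
    (Nat.max (Ep K (apx la lb lc K c) (digit (2^K+1) T (child c 0)) (digit (2^K+1) T (child c 1)))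
             (Ep K (apx ha hb hc K c) (digit (2^K+1) T (child c 0)) (digit (2^K+1) T (child c 1)))).
Definition step n l K T := sumf (fun c => gval n K T c * (2^K+1)^c) (2^(l+1)).
Fixpoint tab n l K k := match k with 0 => 0 | S k => step n l K (tab n l K k) end.
Definition Kof N n := N + 3 + e (N+1) n.
Definition ans n N := digit (2^(Kof N n)+1) (tab n (e (N+1) n) (Kof N n) (e (N+1) n)) 0.

Hypotheses (Rla : recursive2 la) (Rlb : recursive2 lb) (Rlc : recursive2 lc)
  (Rha : recursive2 ha) (Rhb : recursive2 hb) (Rhc : recursive2 hc) (Rchi : recursive2 chi)
  (Re : recursive2 e).

Lemma rec_depthG g : mrec g -> mrec (fun xs => depth (g xs)).
Proof.
  intros Hg. apply rec_op1; auto. unfold depth.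
  eapply rec_ext.
  apply (rec_sum 1 (fun ys => lebn (2 ^ (nth 0 ys 0 + 1)) (nth 1 ys 0 + 1)) (fun xs => nth 0 xs 0)); rg2.
  intros xs. simpl. apply sumf_ext. intros i _. reflexivity.
Qed.

Lemma rec_childG g1 g2 : mrec g1 -> mrec g2 -> mrec (fun xs => child (g1 xs) (g2 xs)).
Proof.
  intros H1 H2. apply rec_op2; auto. unfold child. rg2. apply rec_depthG, rec_proj.
Qed.

Ltac rg3 := repeat first
  [ apply rec_proj | apply rec_const | apply rec_depthG | apply rec_addG | apply rec_subG | apply rec_mulG
  | apply rec_powG | apply rec_divG | apply rec_modG | apply rec_minG | apply rec_maxG
  | apply rec_lebG | apply rec_condG | apply rec_succG
  | (apply rec2G; [assumption | | ]) ].

Lemma rec_gval : mrec (fun xs => gval (nth 0 xs 0) (nth 1 xs 0) (nth 2 xs 0) (nth 3 xs 0)).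
Proof.
  unfold gval, Ep, apx, digit, child. rg3.
Qed.

Lemma rec_op4 (op : nat -> nat -> nat -> nat -> nat) g1 g2 g3 g4 :
  mrec (fun xs => op (nth 0 xs 0) (nth 1 xs 0) (nth 2 xs 0) (nth 3 xs 0)) -> mrec g1 -> mrec g2 -> mrec g3 -> mrec g4 ->
  mrec (fun xs => op (g1 xs) (g2 xs) (g3 xs) (g4 xs)).
Proof.
  intros Ho H1 H2 H3 H4. eapply rec_ext. apply (rec_compl _ [g1; g2; g3; g4] Ho). repeat constructor; auto.
  reflexivity.
Qed.

Lemma rec_step : mrec (fun xs => step (nth 0 xs 0) (nth 1 xs 0) (nth 2 xs 0) (nth 3 xs 0)).
Proof.
  unfold step. eapply rec_ext.
  apply (rec_sum 4 (fun ys => gval (nth 1 ys 0) (nth 3 ys 0) (nth 4 ys 0) (nth 0 ys 0) *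
      (2 ^ nth 3 ys 0 + 1) ^ nth 0 ys 0) (fun xs => 2 ^ (nth 1 xs 0 + 1))).
  - apply rec_mulG; [|rg3]. apply (rec_op4 gval); [apply rec_gval|rg3..].
  - rg3.
  - intros xs. cbv beta. apply sumf_ext. intros i _. cbn [nth].
    rewrite !nth_fst' by lia. reflexivity.
Qed.

Lemma rec_tab : mrec (fun xs => tab (nth 0 xs 0) (nth 1 xs 0) (nth 2 xs 0) (nth 3 xs 0)).
Proof.
  eapply rec_ext.
  apply (rec_PR 3 (fun _ => 0) (fun ys => step (nth 2 ys 0) (nth 3 ys 0) (nth 4 ys 0) (nth 1 ys 0))
     (fun xs => nth 3 xs 0)).
  - rg3.
  - apply (rec_op4 step); [apply rec_step|rg3..].
  - rg3.
  - intros xs. cbv beta. generalize (nth 3 xs 0). induction n; [reflexivity|].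
    cbn [PR tab nth]. rewrite IHn, !nth_fst' by lia. reflexivity.
Qed.

Lemma rec_ans : recursive2 ans.
Proof.
  apply rec2_of_rec. unfold ans, digit, Kof.
  rg3. apply (rec_op4 tab); [apply rec_tab|rg3..].
Qed.
End Alg.

Lemma bcode_app s x : bcode (s ++ [x]) = bcode s + 2 ^ length s * (1 + (if x then 1 else 0)).
Proof.
  induction s as [|b s IH]; simpl. destruct x; reflexivity.
  rewrite IH. destruct b, x; simpl; lia.
Qed.

Lemma bcode_bounds s : 2 ^ length s <= bcode s + 1 < 2 ^ (S (length s)).
Proof.
  induction s as [|b s IH]; simpl. lia. destruct b; simpl in *; lia.
Qed.

Lemma sumf_lt d c : d <= c -> sumf (fun j => if j <? d then 1 else 0) c = d.
Proof.
  induction c; intros H; simpl. lia.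
  destruct (Nat.eq_dec d (S c)).
  - subst. clear IHc. assert (forall m, m <= S c -> sumf (fun j => if j <? S c then 1 else 0) m = m).
    { induction m; intros; simpl; auto. rewrite IHm by lia. destruct (Nat.ltb_spec m (S c)); lia. }
    simpl in H0. specialize (H0 c ltac:(lia)). rewrite H0. destruct (Nat.ltb_spec c (S c)); lia.
  - rewrite IHc by lia. destruct (Nat.ltb_spec c d); lia.
Qed.

Lemma depth_bcode s : depth (bcode s) = length s.
Proof.
  unfold depth. destruct (bcode_bounds s) as [H1 H2].
  set (c := bcode s) in *. set (d := length s) in *.
  assert (Hd : d <= c). { assert (d < 2 ^ d) by (apply Nat.pow_gt_lin_r; lia). lia. }
  rewrite <- (sumf_lt d c Hd). apply sumf_ext. intros j _.
  unfold lebn. destruct (Nat.leb_spec (2 ^ (j+1)) (c+1)); destruct (Nat.ltb_spec j d); auto.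
  - exfalso. assert (2 ^ (S d) <= 2 ^ (j+1)) by (apply Nat.pow_le_mono_r; lia). lia.
  - exfalso. assert (2 ^ (j+1) <= 2 ^ d) by (apply Nat.pow_le_mono_r; lia). lia.
Qed.

Lemma child_bcode s (x : bool) : child (bcode s) (if x then 1 else 0) = bcode (s ++ [x]).
Proof. unfold child. rewrite depth_bcode, bcode_app. reflexivity. Qed.

Section Digit.
Variables (B : nat) (v : nat -> nat).
Hypothesis HB : 1 < B.

Lemma digit_sum C : (forall c, c < C -> v c < B) ->
  sumf (fun c => v c * B ^ c) C < B ^ C /\
  forall i, i < C -> digit B (sumf (fun c => v c * B ^ c) C) i = v i.
Proof.
  induction C; intros Hv; simpl.
  - split. lia. intros; lia.
  - destruct IHC as [H1 H2]. intros; apply Hv; lia.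
    assert (Hp : 0 < B ^ C) by (apply Nat.neq_0_lt_0, Nat.pow_nonzero; lia).
    split.
    + assert (v C <= B - 1) by (specialize (Hv C); lia). 
      assert (v C * B ^ C <= (B - 1) * B ^ C) by (apply Nat.mul_le_mono_r; auto). nia.
    + intros i Hi. unfold digit. destruct (Nat.eq_dec i C).
      * subst. rewrite Nat.div_add by lia. rewrite Nat.div_small by auto. simpl.
        apply Nat.mod_small. apply Hv. lia.
      * assert (Hpi : 0 < B ^ i) by (apply Nat.neq_0_lt_0, Nat.pow_nonzero; lia).
        replace (v C * B ^ C) with ((v C * B ^ (C - i - 1)) * B * B ^ i).
        2:{ assert (E : B ^ (C - i - 1) * B * B ^ i = B ^ C).
            { rewrite <- (Nat.pow_1_r B) at 2. rewrite <- !Nat.pow_add_r. f_equal; lia. }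
            rewrite <- E. lia. }
        rewrite Nat.div_add by lia. rewrite Nat.mod_add by lia. apply H2. lia.
Qed.
End Digit.

Section Tab.
Variables (la lb lc ha hb hc chi : nat -> nat -> nat) (n l K : nat).

Fixpoint Vi (k : nat) (s : bstr) : nat :=
  match k with
  | 0 => 0
  | S k => cond (chi n (bcode s)) (2 ^ K)
      (Nat.max (Ep K (apx la lb lc K (bcode s)) (Vi k (s ++ [false])) (Vi k (s ++ [true])))
               (Ep K (apx ha hb hc K (bcode s)) (Vi k (s ++ [false])) (Vi k (s ++ [true]))))
  end.

Lemma Ep_le p f0 f1 : p <= 2 ^ K -> f0 <= 2 ^ K -> f1 <= 2 ^ K -> Ep K p f0 f1 <= 2 ^ K.
Proof.
  intros. unfold Ep. assert (Hp : 0 < 2 ^ K) by (apply Nat.neq_0_lt_0, Nat.pow_nonzero; lia).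
  apply Nat.div_le_upper_bound. lia. nia.
Qed.

Lemma apx_le a b c x : apx a b c K x <= 2 ^ K.
Proof. unfold apx. lia. Qed.

Lemma digit_le T i : digit (2 ^ K + 1) T i <= 2 ^ K.
Proof. unfold digit. assert (T / (2 ^ K + 1) ^ i mod (2 ^ K + 1) < 2 ^ K + 1) by (apply Nat.mod_upper_bound; lia). lia. Qed.

Lemma gval_le T c : gval la lb lc ha hb hc chi n K T c <= 2 ^ K.
Proof.
  unfold gval, cond. destruct (chi n c =? 0). 2: lia.
  apply Nat.max_lub; apply Ep_le; auto using apx_le, digit_le.
Qed.

Lemma tab_correct k s : length s + k <= l ->
  digit (2 ^ K + 1) (tab la lb lc ha hb hc chi n l K k) (bcode s) = Vi k s.
Proof.
  revert s; induction k; intros s Hs; simpl.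
  - unfold digit. rewrite Nat.div_0_l. apply Nat.mod_0_l. lia.
    apply Nat.pow_nonzero. lia.
  - unfold step.
    assert (HB : 1 < 2 ^ K + 1) by (assert (0 < 2 ^ K) by (apply Nat.neq_0_lt_0, Nat.pow_nonzero; lia); lia).
    assert (Hv : forall c, c < 2 ^ (l + 1) -> gval la lb lc ha hb hc chi n K (tab la lb lc ha hb hc chi n l K k) c < 2 ^ K + 1).
    { intros c _. pose proof (gval_le (tab la lb lc ha hb hc chi n l K k) c). lia. }
    rewrite (proj2 (digit_sum _ _ HB _ Hv)).
    + unfold gval. pose proof (child_bcode s false) as E0. pose proof (child_bcode s true) as E1. simpl in E0, E1. rewrite E0, E1.
      rewrite !IHk by (rewrite length_app; simpl; lia). reflexivity.
    + destruct (bcode_bounds s). assert (2 ^ S (length s) <= 2 ^ (l + 1)) by (apply Nat.pow_le_mono_r; lia). lia.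
Qed.
End Tab.

Open Scope R_scope.

Definition feasible (phi : forecast) (G : path -> Prop) (M : bstr -> R) : Prop :=
  supermartingale phi M /\
  forall w, Rbar_le (Finite (indic G w)) (LimInf_seq (fun n => M (prefix w n))).

Lemma liminf_ub (u : nat -> R) (c : R) m0 :
  (forall m, (m0 <= m)%nat -> u m <= c) -> Rbar_le (LimInf_seq u) (Finite c).
Proof.
  intros H. rewrite <- (LimInf_seq_const c). apply LimInf_le. exists m0. auto.
Qed.

Lemma liminf_lb (u : nat -> R) (c : R) m0 :
  (forall m, (m0 <= m)%nat -> c <= u m) -> Rbar_le (Finite c) (LimInf_seq u).
Proof.
  intros H. rewrite <- (LimInf_seq_const c). apply LimInf_le. exists m0. auto.
Qed.

Lemma indic_in G w : G w -> indic G w = 1.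
Proof. intros H. unfold indic. destruct excluded_middle_informative; tauto. Qed.
Lemma indic_out G w : ~ G w -> indic G w = 0.
Proof. intros H. unfold indic. destruct excluded_middle_informative; tauto. Qed.
Lemma indic_nonneg G w : 0 <= indic G w.
Proof. unfold indic. destruct excluded_middle_informative; lra. Qed.

Lemma prefix_length w m : length (prefix w m) = m.
Proof. unfold prefix. rewrite length_map, length_seq. auto. Qed.

Lemma prefix_S w m : prefix w (S m) = prefix w m ++ [w m].
Proof. unfold prefix. rewrite seq_S, map_app. reflexivity. Qed.

Lemma prefix_ext w m : prefix w (m) = prefix w m.
Proof. reflexivity. Qed.

Lemma prefix_le w m k : exists u, prefix w (m + k) = prefix w m ++ u.
Proof.
  induction k. exists []. rewrite Nat.add_0_r, app_nil_r. auto.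
  destruct IHk as [u Hu]. exists (u ++ [w (m + k)%nat]).
  rewrite Nat.add_succ_r, prefix_S, Hu, app_assoc. auto.
Qed.

Lemma super_child phi M s : supermartingale phi M ->
  exists b, M (s ++ [b]) <= M s.
Proof.
  intros HM. destruct (Rle_dec (M (s ++ [true])) (M s)) as [H|H]. eauto.
  exists false. specialize (HM s (flo phi s)). destruct (f_ok phi s) as [H1 [H2 H3]].
  assert (K := HM ltac:(lra)). simpl in K.
  destruct (Rle_dec (M (s ++ [false])) (M s)) as [H'|H']; auto. exfalso.
  apply Rnot_le_lt in H, H'. set (p := flo phi s) in *. set (a := M (s ++ [true])) in *. set (b0 := M (s ++ [false])) in *.
  assert (E1 : p * (a - M s) >= 0) by nra. assert (E2 : (1 - p) * (b0 - M s) >= 0) by nra.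
  destruct (Rle_lt_dec p 0) as [Hp|Hp].
  - assert (p = 0) by lra. rewrite H0 in K. lra.
  - assert (p * (a - M s) > 0) by nra. nra.
Qed.

Lemma nth_app_l (l u : bstr) i : (i < length l)%nat -> nth i (l ++ u) false = nth i l false.
Proof. intros; apply app_nth1; auto. Qed.

Lemma list_of_nth (l : bstr) : l = map (fun i => nth i l false) (seq 0 (length l)).
Proof.
  induction l using rev_ind. reflexivity.
  rewrite length_app, seq_app, map_app. simpl. rewrite app_nth2 by lia.
  rewrite Nat.sub_diag. simpl. f_equal.
  rewrite IHl at 1. apply map_ext_in. intros i Hi. apply in_seq in Hi.
  rewrite app_nth1 by lia. reflexivity.
Qed.

Lemma path_lemma phi M s : supermartingale phi M ->
  exists w, cyl s w /\ forall m, (length s <= m)%nat -> M (prefix w m) <= M s.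
Proof.
  intros HM.
  set (next := fun t : bstr => if Rle_dec (M (t ++ [true])) (M t) then t ++ [true] else t ++ [false]).
  assert (Hn : forall t, M (next t) <= M t /\ exists b, next t = t ++ [b]).
  { intros t. unfold next. destruct Rle_dec as [H|H]. split; eauto.
    destruct (super_child phi M t HM) as [[|] Hb]. contradiction. split; eauto. }
  set (str := fun j => Nat.iter j next s).
  assert (Hlen : forall j, length (str j) = (length s + j)%nat).
  { induction j. simpl. lia. unfold str in *; simpl. destruct (Hn (Nat.iter j next s)) as [_ [b ->]].
    rewrite length_app, IHj. simpl. lia. }
  assert (Hext : forall j k i, (i < length (str j))%nat -> nth i (str (j + k)%nat) false = nth i (str j) false).
  { intros j k i Hi. induction k. rewrite Nat.add_0_r. auto.
    rewrite Nat.add_succ_r. unfold str at 1; simpl. destruct (Hn (Nat.iter (j + k) next s)) as [_ [b ->]].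
    rewrite app_nth1. apply IHk. fold (str (j+k)%nat). rewrite !Hlen in *. lia. }
  set (w := fun i : nat => nth i (str (S i)) false).
  assert (Hpre : forall j, prefix w (length s + j) = str j).
  { intros j. rewrite (list_of_nth (str j)), Hlen. unfold prefix. apply map_ext_in.
    intros i Hi. apply in_seq in Hi. unfold w.
    destruct (Nat.le_gt_cases (S i) j).
    - replace j with (S i + (j - S i))%nat by lia. rewrite Hext. auto. rewrite Hlen. lia.
    - replace (S i) with (j + (S i - j))%nat by lia. rewrite Hext. auto. rewrite Hlen. lia. }
  assert (Hdec : forall j, M (str j) <= M s).
  { induction j. simpl. lra. unfold str in *; simpl. destruct (Hn (Nat.iter j next s)). lra. }
  exists w. split.
  - unfold cyl. specialize (Hpre 0%nat). rewrite Nat.add_0_r in Hpre. rewrite Hpre. reflexivity.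
  - intros m Hm. replace m with (length s + (m - length s))%nat by lia. rewrite Hpre. auto.
Qed.

Lemma feasible_nonneg phi G M s : feasible phi G M -> 0 <= M s.
Proof.
  intros [HM Hl]. destruct (path_lemma phi M s HM) as [w [_ Hw]].
  specialize (Hl w). pose proof (liminf_ub _ _ _ Hw) as H.
  pose proof (indic_nonneg G w).
  destruct (LimInf_seq (fun n => M (prefix w n))); simpl in *; lra.
Qed.

Lemma feasible_ge1 phi G M s : feasible phi G M -> (forall w, cyl s w -> G w) -> 1 <= M s.
Proof.
  intros [HM Hl] HG. destruct (path_lemma phi M s HM) as [w [Hc Hw]].
  specialize (Hl w). rewrite indic_in in Hl by auto. pose proof (liminf_ub _ _ _ Hw) as H.
  destruct (LimInf_seq (fun n => M (prefix w n))); simpl in *; lra.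
Qed.

Lemma upper_prob_ub phi G M : feasible phi G M -> Rbar_le (upper_prob phi G) (Finite (M [])).
Proof.
  intros [HM Hl]. unfold upper_prob. destruct (Glb_Rbar_correct
    (fun v => exists M, supermartingale phi M /\
      (forall w, Rbar_le (Finite (indic G w)) (LimInf_seq (fun n => M (prefix w n)))) /\ v = M [])) as [H _].
  apply H. eauto.
Qed.

Lemma upper_prob_lb phi G x : (forall M, feasible phi G M -> x <= M []) ->
  Rbar_le (Finite x) (upper_prob phi G).
Proof.
  intros H. unfold upper_prob. destruct (Glb_Rbar_correct
    (fun v => exists M, supermartingale phi M /\
      (forall w, Rbar_le (Finite (indic G w)) (LimInf_seq (fun n => M (prefix w n)))) /\ v = M [])) as [_ H2].
  apply H2. intros v [M [H3 [H4 ->]]]. simpl. apply H. split; auto.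
Qed.

Lemma upper_prob_approx phi G b eps : Rbar_le (upper_prob phi G) (Finite b) -> 0 < eps ->
  exists M, feasible phi G M /\ M [] <= b + eps.
Proof.
  intros Hb He. apply NNPP. intros Hn.
  assert (Rbar_le (Finite (b + eps)) (upper_prob phi G)).
  { apply upper_prob_lb. intros M HM. apply Rnot_lt_le. intros Hlt. apply Hn. exists M. split; auto. lra. }
  destruct (upper_prob phi G); simpl in *; lra.
Qed.

Lemma upper_prob_char phi G x :
  (exists M, feasible phi G M /\ M [] = x) -> (forall M, feasible phi G M -> x <= M []) ->
  upper_prob phi G = Finite x.
Proof.
  intros [M [HM Hx]] Hl. pose proof (upper_prob_ub phi G M HM). pose proof (upper_prob_lb phi G x Hl).
  rewrite Hx in *. destruct (upper_prob phi G); simpl in *; try contradiction. f_equal. lra.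
Qed.

Open Scope R_scope.

Definition UE (lo hi f0 f1 : R) : R := Rmax (lo * f1 + (1 - lo) * f0) (hi * f1 + (1 - hi) * f0).

Lemma UE_ge lo hi f0 f1 p : lo <= p <= hi -> p * f1 + (1 - p) * f0 <= UE lo hi f0 f1.
Proof.
  intros Hp. unfold UE. destruct (Rle_dec f0 f1).
  - eapply Rle_trans; [|apply Rmax_r]. nra.
  - eapply Rle_trans; [|apply Rmax_l]. nra.
Qed.

Lemma UE_bounds lo hi f0 f1 : 0 <= lo <= 1 -> 0 <= hi <= 1 -> 0 <= f0 <= 1 -> 0 <= f1 <= 1 ->
  0 <= UE lo hi f0 f1 <= 1.
Proof.
  intros. unfold UE. split.
  - eapply Rle_trans; [|apply Rmax_l]. nra.
  - apply Rmax_lub; nra.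
Qed.

Section Game.
Variables (phi : forecast) (A : nat -> bstr -> bool) (n l : nat).

Fixpoint V (k : nat) (s : bstr) : R :=
  match k with
  | O => 0
  | S k => if A n s then 1 else UE (flo phi s) (fhi phi s) (V k (s ++ [false])) (V k (s ++ [true]))
  end.

Lemma V_bounds k s : 0 <= V k s <= 1.
Proof.
  revert s; induction k; intros s; simpl. lra. destruct (A n s). lra.
  destruct (f_ok phi s) as [? [? ?]]. apply UE_bounds; auto; lra.
Qed.

Definition LT := cylset (An_lt A n l).

Lemma V_lower M : feasible phi LT M -> forall k s, (length s + k = l)%nat -> V k s <= M s.
Proof.
  intros HM. induction k; intros s Hs; simpl.
  - eapply feasible_nonneg; eauto.
  - destruct (A n s) eqn:EA.
    + eapply feasible_ge1; eauto. intros w Hw. exists s. split; auto. split; auto. lia.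
    + unfold UE. destruct HM as [HS Hl].
      assert (H0 := IHk (s ++ [false]) ltac:(rewrite length_app; simpl; lia)).
      assert (H1 := IHk (s ++ [true]) ltac:(rewrite length_app; simpl; lia)).
      destruct (f_ok phi s) as [? [? ?]].
      apply Rmax_lub.
      * eapply Rle_trans; [|apply (HS s (flo phi s)); lra]. simpl. nra.
      * eapply Rle_trans; [|apply (HS s (fhi phi s)); lra]. simpl. nra.
Qed.

Definition hit (s : bstr) : Prop := exists t u, A n t = true /\ (length t < l)%nat /\ s = t ++ u.

Definition Mopt (s : bstr) : R :=
  if excluded_middle_informative (hit s) then 1
  else if (length s <=? l)%nat then V (l - length s) s else 0.

Lemma hit_app s x : hit s -> hit (s ++ [x]).
Proof. intros [t [u [H1 [H2 ->]]]]. exists t, (u ++ [x]). rewrite app_assoc. auto. Qed.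

Lemma hit_child s x : hit (s ++ [x]) -> ~ hit s -> A n (s ++ [x]) = true /\ (length (s ++ [x]) < l)%nat.
Proof.
  intros [t [u [H1 [H2 H3]]]] Hn. destruct u as [|y u'] using rev_ind.
  - rewrite app_nil_r in H3. subst. auto.
  - rewrite app_assoc in H3. apply app_inj_tail in H3. destruct H3 as [H3 _].
    exfalso. apply Hn. exists t, u'. auto.
Qed.

Lemma Mopt_nonneg s : 0 <= Mopt s.
Proof.
  unfold Mopt. destruct excluded_middle_informative. lra. destruct (length s <=? l)%nat. apply V_bounds. lra.
Qed.

Lemma Mopt_child s x : ~ hit s -> (length s < l)%nat -> A n s = false ->
  Mopt (s ++ [x]) = V (l - length s - 1) (s ++ [x]).
Proof.
  intros Hn Hl HA. unfold Mopt. rewrite length_app. simpl.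
  destruct excluded_middle_informative as [h|h].
  - destruct (hit_child s x h Hn) as [H1 H2]. rewrite length_app in H2. simpl in H2.
    replace (l - length s - 1)%nat with (S (l - length s - 2)) by lia. simpl. rewrite H1. auto.
  - replace (length s + 1 <=? l)%nat with true by (symmetry; apply Nat.leb_le; lia). f_equal. lia.
Qed.

Lemma Mopt_super : supermartingale phi Mopt.
Proof.
  intros s p Hp. simpl. destruct (f_ok phi s) as [? [? ?]].
  destruct (excluded_middle_informative (hit s)) as [h|h].
  - unfold Mopt. destruct excluded_middle_informative as [_|c]; [|exfalso; apply c, hit_app, h].
    destruct excluded_middle_informative as [_|c]; [|exfalso; apply c, hit_app, h].
    destruct excluded_middle_informative as [_|c]; [|contradiction]. lra.
  - destruct (Nat.lt_ge_cases (length s) l) as [Hl|Hl].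
    + assert (HA : A n s = false).
      { destruct (A n s) eqn:E; auto. exfalso. apply h. exists s, []. rewrite app_nil_r. auto. }
      rewrite (Mopt_child s true), (Mopt_child s false) by auto. unfold Mopt at 1.
      destruct excluded_middle_informative; [contradiction|].
      replace (length s <=? l)%nat with true by (symmetry; apply Nat.leb_le; lia).
      assert (E : (l - length s = S (l - length s - 1))%nat) by lia.
      set (k := (l - length s - 1)%nat) in *. rewrite E. simpl. rewrite HA.
      apply UE_ge. lra.
    + assert (forall x, Mopt (s ++ [x]) = 0).
      { intros x. unfold Mopt. destruct excluded_middle_informative as [h'|h'].
        - destruct (hit_child s x h' h) as [_ H2]. rewrite length_app in H2. simpl in H2. lia.
        - rewrite length_app. simpl. replace (length s + 1 <=? l)%nat with false; auto.
          symmetry. apply Nat.leb_gt. lia. }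
      rewrite !H2. pose proof (Mopt_nonneg s). lra.
Qed.

Lemma Mopt_feasible : feasible phi LT Mopt.
Proof.
  split. apply Mopt_super. intros w.
  destruct (classic (LT w)) as [h|h].
  - rewrite indic_in by auto. destruct h as [t [[H1 H2] H3]].
    apply (liminf_lb _ _ (length t)). intros m Hm.
    unfold Mopt. destruct excluded_middle_informative as [_|c]. lra. exfalso. apply c.
    destruct (prefix_le w (length t) (m - length t)) as [u Hu].
    replace (length t + (m - length t))%nat with m in Hu by lia.
    exists t, u. unfold cyl in H3. rewrite H3 in Hu. auto.
  - rewrite indic_out by auto. apply (liminf_lb _ _ 0). intros; apply Mopt_nonneg.
Qed.

Lemma Mopt_nil : Mopt [] = V l [].
Proof.
  unfold Mopt. destruct excluded_middle_informative as [h|h].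
  - destruct h as [t [u [H1 [H2 H3]]]]. symmetry in H3. apply app_eq_nil in H3. destruct H3; subst.
    destruct l; simpl in *. lia. rewrite H1. auto.
  - simpl. rewrite Nat.sub_0_r. auto.
Qed.

Theorem upper_prob_LT : upper_prob phi LT = Finite (V l []).
Proof.
  apply upper_prob_char.
  - exists Mopt. split. apply Mopt_feasible. apply Mopt_nil.
  - intros M HM. apply (V_lower M HM l []). reflexivity.
Qed.
End Game.

Open Scope R_scope.

Lemma absle x t : Rabs x <= t -> -t <= x <= t.
Proof. unfold Rabs; destruct Rcase_abs; lra. Qed.

Lemma INR_min a b : INR (Nat.min a b) = Rmin (INR a) (INR b).
Proof.
  destruct (Nat.le_ge_cases a b).
  - rewrite Nat.min_l by auto. rewrite Rmin_left; auto. apply le_INR; auto.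
  - rewrite Nat.min_r by auto. rewrite Rmin_right; auto. apply le_INR; auto.
Qed.

Lemma INR_max a b : INR (Nat.max a b) = Rmax (INR a) (INR b).
Proof.
  destruct (Nat.le_ge_cases a b).
  - rewrite Nat.max_r by auto. rewrite Rmax_right; auto. apply le_INR; auto.
  - rewrite Nat.max_l by auto. rewrite Rmax_left; auto. apply le_INR; auto.
Qed.

Lemma div_floor a b : (0 < b)%nat ->
  INR (a / b) * INR b <= INR a < (INR (a / b) + 1) * INR b.
Proof.
  intros Hb. pose proof (Nat.div_mod a b ltac:(lia)) as H.
  pose proof (Nat.mod_upper_bound a b ltac:(lia)) as H2.
  apply (f_equal INR) in H. rewrite plus_INR, mult_INR in H.
  apply lt_INR in H2. pose proof (pos_INR (a mod b)). split; nra.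
Qed.

Lemma Rmax_diff a b c d t : Rabs (a - c) <= t -> Rabs (b - d) <= t -> Rabs (Rmax a b - Rmax c d) <= t.
Proof.
  intros H1 H2. unfold Rmax. apply absle in H1. apply absle in H2.
  apply Rabs_le. destruct (Rle_dec a b), (Rle_dec c d); lra.
Qed.

Lemma pos_pow2 K : 0 < INR (2 ^ K).
Proof. apply lt_0_INR. apply Nat.neq_0_lt_0, Nat.pow_nonzero. lia. Qed.

Section Approx.
Variables (la lb lc ha hb hc chi : nat -> nat -> nat) (n K : nat).
Variables (phi : forecast) (A : nat -> bstr -> bool).
Hypothesis Hlo : forall s, Rabs (flo phi s - ratc (la (bcode s) K) (lb (bcode s) K) (lc (bcode s) K)) <= (/2) ^ K.
Hypothesis Hhi : forall s, Rabs (fhi phi s - ratc (ha (bcode s) K) (hb (bcode s) K) (hc (bcode s) K)) <= (/2) ^ K.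
Hypothesis Hchi : forall s, chi n (bcode s) = if A n s then 1%nat else 0%nat.

Let P := INR (2 ^ K).

Lemma P_inv : (/2) ^ K * P = 1.
Proof. unfold P. rewrite pow_INR. simpl INR. rewrite <- Rpow_mult_distr. replace (/2 * (1+1)) with 1 by lra. apply pow1. Qed.

Lemma apx_err (a b c : nat -> nat -> nat) x lo :
  0 <= lo <= 1 -> Rabs (lo - ratc (a x K) (b x K) (c x K)) <= (/2) ^ K ->
  Rabs (INR (apx a b c K x) - lo * P) <= 2.
Proof.
  intros Hl Hr. unfold apx. rewrite INR_min. fold P.
  pose proof (pos_pow2 K) as HP. fold P in HP.
  assert (Hr' : Rabs (lo * P - ratc (a x K) (b x K) (c x K) * P) <= 1).
  { rewrite <- Rmult_minus_distr_r, Rabs_mult, (Rabs_pos_eq P) by lra.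
    rewrite <- P_inv. apply Rmult_le_compat_r; lra. }
  unfold ratc in Hr'. set (q := ((a x K - b x K) * 2 ^ K / S (c x K))%nat).
  pose proof (div_floor ((a x K - b x K) * 2 ^ K) (S (c x K)) ltac:(lia)) as Hf. fold q in Hf.
  rewrite mult_INR in Hf. fold P in Hf.
  pose proof (lt_0_INR (S (c x K)) ltac:(lia)) as Hc.
  destruct (Nat.le_gt_cases (b x K) (a x K)) as [Hab|Hab].
  - rewrite minus_INR in Hf by auto.
    set (r := (INR (a x K) - INR (b x K)) / INR (S (c x K))) in *.
    assert (Hrr : (INR (a x K) - INR (b x K)) * P = r * P * INR (S (c x K))) by (unfold r; field; lra).
    rewrite Hrr in Hf. destruct Hf as [Hf1 Hf2].
    assert (INR q <= r * P) by (apply Rmult_le_reg_r with (INR (S (c x K))); lra).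
    assert (r * P < INR q + 1) by (apply Rmult_lt_reg_r with (INR (S (c x K))); lra).
    apply absle in Hr'. apply Rabs_le. unfold Rmin. destruct Rle_dec; nra.
  - assert (Hq : q = 0%nat).
    { unfold q. replace (a x K - b x K)%nat with 0%nat by lia. rewrite Nat.mul_0_l. apply Nat.div_0_l. lia. }
    rewrite Hq. simpl INR. rewrite Rmin_right by lra.
    assert (INR (a x K) - INR (b x K) < 0) by (apply lt_INR in Hab; lra).
    assert ((INR (a x K) - INR (b x K)) / INR (S (c x K)) < 0).
    { apply Rdiv_neg_pos; lra. }
    apply absle in Hr'. apply Rabs_le. nra.
Qed.

Lemma Ep_err p f0 f1 pr F0 F1 e :
  (p <= 2 ^ K)%nat -> (f0 <= 2 ^ K)%nat -> (f1 <= 2 ^ K)%nat ->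
  0 <= pr <= 1 -> 0 <= F0 <= 1 -> 0 <= F1 <= 1 ->
  Rabs (INR p - pr * P) <= 2 -> Rabs (INR f0 - F0 * P) <= e -> Rabs (INR f1 - F1 * P) <= e ->
  Rabs (INR (Ep K p f0 f1) - (pr * F1 + (1 - pr) * F0) * P) <= e + 3.
Proof.
  intros Hp H0 H1 Hpr HF0 HF1 Ep0 E0 E1. unfold Ep.
  pose proof (pos_pow2 K) as HP. fold P in HP.
  pose proof (div_floor ((2 ^ K - p) * f0 + p * f1) (2 ^ K) ltac:(apply Nat.neq_0_lt_0, Nat.pow_nonzero; lia)) as Hf.
  rewrite plus_INR, !mult_INR, minus_INR in Hf by auto. fold P in Hf.
  set (Z := ((P - INR p) * INR f0 + INR p * INR f1) / P).
  assert (HZ : INR (2 ^ K) = P) by reflexivity.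
  assert (Hz1 : INR (((2 ^ K - p) * f0 + p * f1) / 2 ^ K) <= Z).
  { unfold Z. apply Rmult_le_reg_r with P; auto. field_simplify; [|lra]. lra. }
  assert (Hz2 : Z < INR (((2 ^ K - p) * f0 + p * f1) / 2 ^ K) + 1).
  { unfold Z. apply Rmult_lt_reg_r with P; auto. field_simplify; [|lra]. lra. }
  apply le_INR in Hp, H0, H1. fold P in Hp, H0, H1.
  assert (HA : Rabs ((P - INR p) * (INR f0 - F0 * P) + INR p * (INR f1 - F1 * P)) <= P * e).
  { eapply Rle_trans. apply Rabs_triang. rewrite !Rabs_mult.
    rewrite (Rabs_pos_eq (P - INR p)) by lra. rewrite (Rabs_pos_eq (INR p)) by (apply pos_INR).
    pose proof (pos_INR p). nra. }
  assert (HB : Rabs ((INR p - pr * P) * (F1 - F0)) <= 2).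
  { rewrite Rabs_mult. assert (Rabs (F1 - F0) <= 1) by (apply Rabs_le; lra).
    pose proof (Rabs_pos (INR p - pr * P)). pose proof (Rabs_pos (F1 - F0)). nra. }
  assert (HZe : Z - (pr * F1 + (1 - pr) * F0) * P =
     ((P - INR p) * (INR f0 - F0 * P) + INR p * (INR f1 - F1 * P)) / P + (INR p - pr * P) * (F1 - F0)).
  { unfold Z. field. lra. }
  assert (HA' : Rabs (((P - INR p) * (INR f0 - F0 * P) + INR p * (INR f1 - F1 * P)) / P) <= e).
  { unfold Rdiv. rewrite Rabs_mult, Rabs_inv, (Rabs_pos_eq P) by lra.
    apply Rmult_le_reg_r with P; auto. rewrite Rmult_assoc, Rinv_l by lra. lra. }
  assert (Rabs (Z - (pr * F1 + (1 - pr) * F0) * P) <= e + 2).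
  { rewrite HZe. eapply Rle_trans. apply Rabs_triang. lra. }
  apply absle in H. apply Rabs_le. lra.
Qed.



Lemma Vi_le k s : (Vi la lb lc ha hb hc chi n K k s <= 2 ^ K)%nat.
Proof.
  revert s; induction k; intros s; simpl. lia. unfold cond. destruct (chi n (bcode s) =? 0)%nat. 2: lia.
  apply Nat.max_lub; apply Ep_le; auto using apx_le.
Qed.

Lemma Vi_err k s : Rabs (INR (Vi la lb lc ha hb hc chi n K k s) - V phi A n k s * P) <= 3 * INR k.
Proof.
  revert s; induction k; intros s; cbn [Vi V].
  - rewrite Rmult_0_l, Rminus_0_r. simpl. rewrite Rabs_R0. lra.
  - rewrite Hchi, S_INR. destruct (A n s); unfold cond; cbn [Nat.eqb].
    + rewrite Rmult_1_l. unfold P. rewrite Rminus_diag, Rabs_R0. pose proof (pos_INR k). lra.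
    + rewrite INR_max. unfold UE. rewrite (Rmult_comm (Rmax _ _) P), <- RmaxRmult by (apply Rlt_le, pos_pow2).
      rewrite !(Rmult_comm P).
      destruct (f_ok phi s) as [? [? ?]].
      replace (3 * (INR k + 1)) with (3 * INR k + 3) by lra.
      apply Rmax_diff; apply Ep_err; auto using apx_le, Vi_le, V_bounds; try lra.
      * apply apx_err; auto; lra.
      * apply apx_err; auto; lra.
Qed.
End Approx.

Open Scope R_scope.

Lemma feasible_sum phi G G1 G2 M1 M2 :
  feasible phi G1 M1 -> feasible phi G2 M2 -> (forall w, G w -> G1 w \/ G2 w) ->
  feasible phi G (fun s => M1 s + M2 s).
Proof.
  intros H1 H2 HG. pose proof (fun s => feasible_nonneg _ _ _ s H1) as N1.
  pose proof (fun s => feasible_nonneg _ _ _ s H2) as N2.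
  destruct H1 as [S1 L1], H2 as [S2 L2]. split.
  - intros s p Hp. specialize (S1 s p Hp). specialize (S2 s p Hp). simpl in *. lra.
  - intros w. destruct (classic (G w)) as [h|h].
    + rewrite indic_in by auto. destruct (HG w h) as [g|g].
      * specialize (L1 w). rewrite indic_in in L1 by auto. eapply Rbar_le_trans; [apply L1|].
        apply LimInf_le. exists 0%nat. intros m _. specialize (N2 (prefix w m)). lra.
      * specialize (L2 w). rewrite indic_in in L2 by auto. eapply Rbar_le_trans; [apply L2|].
        apply LimInf_le. exists 0%nat. intros m _. specialize (N1 (prefix w m)). lra.
    + rewrite indic_out by auto. apply (liminf_lb _ _ 0). intros m _.
      specialize (N1 (prefix w m)). specialize (N2 (prefix w m)). lra.
Qed.

Lemma feasible_mono phi G G' M : feasible phi G M -> (forall w, G' w -> G w) -> feasible phi G' M.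
Proof.
  intros [HS HL] Hs. split; auto. intros w. eapply Rbar_le_trans; [|apply HL].
  simpl. destruct (classic (G' w)). rewrite !indic_in; auto. lra.
  rewrite indic_out by auto. apply indic_nonneg.
Qed.

Lemma half_pow_mul m : (/2) ^ m * 2 ^ m = 1.
Proof. rewrite <- Rpow_mult_distr. replace (/2 * 2) with 1 by lra. apply pow1. Qed.

Lemma err_bound l N : 3 * INR l * (/2) ^ (N + 3 + l) <= (/2) ^ (N + 1).
Proof.
  replace (N + 3 + l)%nat with ((N + 1) + (l + 2))%nat by lia. rewrite pow_add.
  assert (H : (3 * l <= 2 ^ (l + 2))%nat).
  { assert (l < 2 ^ l)%nat by (apply Nat.pow_gt_lin_r; lia). rewrite Nat.pow_add_r. simpl. lia. }
  apply le_INR in H. rewrite mult_INR, pow_INR in H. simpl INR in H.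
  replace (1 + 1 + 1) with 3 in H by lra. replace (1 + 1) with 2 in H by lra.
  pose proof (half_pow_mul (l + 2)). pose proof (pow_lt (/2) (N+1) ltac:(lra)).
  pose proof (pow_lt (/2) (l+2) ltac:(lra)).
  set (a := (/2) ^ (l + 2)) in *. set (b := (/2) ^ (N + 1)) in *.
  assert (3 * INR l * a <= 1).
  { rewrite <- H0. rewrite (Rmult_comm a). apply Rmult_le_compat_r; lra. }
  replace (3 * INR l * (b * a)) with ((3 * INR l * a) * b) by ring.
  replace b with (1 * b) at 2 by ring. apply Rmult_le_compat_r; lra.
Qed.

Theorem proposition5p5 (phi : forecast) (A : nat -> bstr -> bool) :
  computable_forecast phi ->
  schnorr_test phi A ->
  computable_rbar_seq (fun n => upper_prob phi (cylset (An A n))).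
Proof.
  intros [[la [lb [lc [Rla [Rlb [Rlc Hlo]]]]]] [ha [hb [hc [Rha [Rhb [Rhc Hhi]]]]]]]
         [[chi [Rchi Hchi]] [_ [e [Re He]]]].
  exists (ans la lb lc ha hb hc chi e), (fun _ _ => 0%nat), (fun n N => (2 ^ (Kof e N n) - 1)%nat).
  split; [apply rec_ans; auto|]. split; [apply rec2_of_rec; apply rec_const|].
  split. { apply rec2_of_rec. unfold Kof. rg2. }
  intros n N.
  set (l := e (N + 1)%nat n). set (K := Kof e N n).
  assert (HK : K = (N + 3 + l)%nat) by reflexivity.
  set (Vv := V phi A n l []).
  assert (Hans : ans la lb lc ha hb hc chi e n N = Vi la lb lc ha hb hc chi n K l []).
  { unfold ans. fold l. fold K. apply (tab_correct la lb lc ha hb hc chi n l K l []). simpl. lia. }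
  assert (Herr := Vi_err la lb lc ha hb hc chi n K phi A (fun s => Hlo s K) (fun s => Hhi s K) (Hchi n) l []).
  fold Vv in Herr.
  assert (Hlb : Rbar_le (Finite Vv) (upper_prob phi (cylset (An A n)))).
  { apply upper_prob_lb. intros M HM. apply (V_lower phi A n l M); [|reflexivity].
    eapply feasible_mono; eauto. intros w [s [[H1 H2] H3]]. exists s. split; auto. }
  assert (Hub : forall eps, 0 < eps -> Rbar_le (upper_prob phi (cylset (An A n))) (Finite (Vv + (/2) ^ (N + 1) + eps))).
  { intros eps Heps.
    destruct (upper_prob_approx _ _ _ eps (He (N + 1)%nat n l (le_n _)) Heps) as [M2 [HM2 HM2b]].
    eapply Rbar_le_trans. apply (upper_prob_ub phi _ (fun s => Mopt phi A n l s + M2 s)).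
    - eapply feasible_sum. apply Mopt_feasible. apply HM2.
      intros w Hw. destruct (classic (LT A n l w)); [left|right]; auto.
    - simpl. rewrite Mopt_nil. fold Vv. lra. }
  destruct (upper_prob phi (cylset (An A n))) as [y| |] eqn:Ey.
  2: { specialize (Hub 1 Rlt_0_1). simpl in Hub. contradiction. }
  2: { simpl in Hlb. contradiction. }
  exists y. split; auto. simpl in Hlb.
  assert (Hy : y <= Vv + (/2) ^ (N + 1)).
  { apply Rnot_lt_le. intros Hlt. specialize (Hub ((y - (Vv + (/2) ^ (N + 1))) / 2) ltac:(lra)).
    simpl in Hub. lra. }
  unfold ratc. rewrite Hans. simpl INR at 2. rewrite Rminus_0_r.
  replace (S (2 ^ K - 1)) with (2 ^ K)%nat by (assert (2 ^ K <> 0)%nat by (apply Nat.pow_nonzero; lia); lia).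
  assert (HP : INR (2 ^ K) = 2 ^ K) by (rewrite pow_INR; simpl; f_equal; lra).
  rewrite HP in *.
  pose proof (err_bound l N) as Eb. rewrite <- HK in Eb.
  pose proof (half_pow_mul K) as HPi.
  pose proof (pow_lt 2 K ltac:(lra)).
  set (X := INR (Vi la lb lc ha hb hc chi n K l [])) in *.
  assert (Rabs (X / 2 ^ K - Vv) <= (/2) ^ (N + 1)).
  { replace (X / 2 ^ K - Vv) with ((X - Vv * 2 ^ K) * (/2) ^ K).
    2: { rewrite pow_inv. field. apply pow_nonzero; lra. }
    rewrite Rabs_mult, (Rabs_pos_eq ((/2) ^ K)) by (apply pow_le; lra).
    eapply Rle_trans; [|apply Eb]. apply Rmult_le_compat_r. apply pow_le; lra. lra. }
  replace ((/2) ^ N) with ((/2) ^ (N + 1) + (/2) ^ (N + 1)).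
  2: { rewrite pow_add. simpl. lra. }
  apply absle in H0. apply Rabs_le. lra.
Qed.
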